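(* In the session calculus, weak fairness of actions (WA) coincides with J-fairness of actions (JA): a path is WA-fair iff it is JA-fair.
   Context: Session calculus: threads $P ::= \mathbf{end} \mid \bigoplus_{i\in I} p_i!\lambda_i;P_i \mid \sum_{i\in I} p_i?\lambda_i;P_i \mid X \mid \mu X.P$ (guarded recursion), thread states additionally $\langle q!\lambda\rangle;P$; networks $p[\![P]\!]\mid 0\mid N\parallel N$ with distinct locations and closed threads, modulo associativity/commutativity/unit. Transitions: (choice) $p[\![\bigoplus_{i\in I}p_i!\lambda_i;P_i]\!]\parallel N \xrightarrow{\tau} p[\![\langle p_k!\lambda_k\rangle;P_k]\!]\parallel N$; (unfold) $p[\![\mu X.P]\!]\parallel N\xrightarrow{\tau} p[\![P\{\mu X.P/X\}]\!]\parallel N$; (comm) $p_k[\![\langle q!\lambda_k\rangle;Q]\!]\parallel q[\![\sum_{i\in I}p_i?\lambda_i;P_i]\!]\parallel N \xrightarrow{(p_k,\lambda_k,q)} p_k[\![Q]\!]\parallel q[\![P_k]\!]\parallel N$. $\mathrm{comp}(t)$ is the moving location for a $\tau$-transition and $\{p,q\}$ for label $(p,\lambda,q)$; $t,u$ are concurrent if $\mathrm{comp}(t)\cap\mathrm{comp}(u)=\emptyset$. A path is a network state with a maximal sequence of transitions. Actions as tasks: a label $\alpha$ is enabled in $N$ if some transition labelled $\alpha$ leaves $N$; a path engages in $\alpha$ if it contains a transition labelled $\alpha$. $\alpha$ is perpetually enabled on a path if enabled in all its states. WA: $\pi$ is WA-fair if for every suffix $\pi'$, every action perpetually enabled on $\pi'$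 is engaged in by $\pi'$. JA: $\alpha$ is enabled during a transition $u$ from $N$ to $N'$ if there is a transition $t$ from $N$ labelled $\alpha$ that is concurrent with $u$; $\alpha$ is continuously enabled on a path if enabled in all its states and during all its transitions; $\pi$ is JA-fair if for every suffix $\pi'$, every action continuously enabled on $\pi'$ is engaged in by $\pi'$. *)

(* Defs.v *)
From Stdlib Require Import List Arith.
Import ListNotations.
Set Implicit Arguments.

Section Session.
Variables (Loc Lab : Type).

(* Thread states.  Recursion variables are named by nat.
   TSend bs = (+)_{i} p_i!l_i;P_i,  TRecv bs = sum_i p_i?l_i;P_i,
   TSent q l P = <q!l>;P  (a thread state after an internal choice). *)
Inductive thread : Type :=
| TEnd : thread
| TSend : list (Loc * Lab * thread) -> thread
| TRecv : list (Loc * Lab * thread) -> thread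
| TVar : nat -> thread
| TMu : nat -> thread -> thread
| TSent : Loc -> Lab -> thread -> thread.

(* substitution P{R/X} (R will always be closed, so no capture) *)
Fixpoint subst (X : nat) (R : thread) (P : thread) : thread :=
  match P with
  | TEnd => TEnd
  | TSend bs => TSend ((fix go (l : list (Loc * Lab * thread)) :=
                         match l with
                         | [] => []
                         | (p, a, Q) :: l' => (p, a, subst X R Q) :: go l'
                         end) bs)
  | TRecv bs => TRecv ((fix go (l : list (Loc * Lab * thread)) :=
                         match l with
                         | [] => []
                         | (p, a, Q) :: l' => (p, a, subst X R Q) :: go l'
                         end) bs)
  | TVar Y => if Nat.eqb X Y then R else TVar Y
  | TMu Y Q => if Nat.eqb X Y then TMu Y Q else TMu Y (subst X R Q)
  | TSent q a Q => TSent q a (subst X R Q)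
  end.

Fixpoint closed_in (xs : list nat) (P : thread) : Prop :=
  match P with
  | TEnd => True
  | TSend bs | TRecv bs =>
      (fix go (l : list (Loc * Lab * thread)) : Prop :=
         match l with
         | [] => True
         | (_, _, Q) :: l' => closed_in xs Q /\ go l'
         end) bs
  | TVar Y => In Y xs
  | TMu Y Q => closed_in (Y :: xs) Q
  | TSent _ _ Q => closed_in xs Q
  end.

Definition closed (P : thread) : Prop := closed_in [] P.

Fixpoint unguarded (X : nat) (P : thread) : Prop :=
  match P with
  | TVar Y => X = Y
  | TMu Y Q => X <> Y /\ unguarded X Q
  | _ => False
  end.

Fixpoint guarded (P : thread) : Prop :=
  match P with
  | TEnd | TVar _ => True
  | TSend bs | TRecv bs =>
      (fix go (l : list (Loc * Lab * thread)) : Prop :=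
         match l with
         | [] => True
         | (_, _, Q) :: l' => guarded Q /\ go l'
         end) bs
  | TMu Y Q => ~ unguarded Y Q /\ guarded Q
  | TSent _ _ Q => guarded Q
  end.

(* A network p1[[P1]] || ... || pn[[Pn]] with distinct locations, taken
   modulo associativity/commutativity/unit, is a finite partial map from
   locations to thread states. *)
Definition network := Loc -> option thread.

Definition wf_network (N : network) : Prop :=
  (exists dom : list Loc, forall p, N p <> None -> In p dom) /\
  (forall p P, N p = Some P -> closed P /\ guarded P).

(* transitions, identified by their kind and the locations involved *)
Inductive tinfo : Type :=
| TrTau : Loc -> tinfo
| TrComm : Loc -> Lab -> Loc -> tinfo.

Inductive label : Type :=
| Tau : label
| Comm : Loc -> Lab -> Loc -> label.

Definition lab (t : tinfo) : label :=
  match t with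
  | TrTau _ => Tau
  | TrComm p l q => Comm p l q
  end.

Definition comp (t : tinfo) (r : Loc) : Prop :=
  match t with
  | TrTau p => r = p
  | TrComm p _ q => r = p \/ r = q
  end.

Definition concurrent (t u : tinfo) : Prop :=
  forall r, comp t r -> ~ comp u r.

Definition others_same (N N' : network) (S : Loc -> Prop) : Prop :=
  forall r, ~ S r -> N' r = N r.

Inductive step (N : network) : tinfo -> network -> Prop :=
| st_choice : forall p bs q l P N',
    N p = Some (TSend bs) -> In (q, l, P) bs ->
    N' p = Some (TSent q l P) ->
    others_same N N' (fun r => r = p) ->
    step N (TrTau p) N'
| st_unfold : forall p X P N',
    N p = Some (TMu X P) ->
    N' p = Some (subst X (TMu X P) P) ->
    others_same N N' (fun r => r = p) ->
    step N (TrTau p) N'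
| st_comm : forall p q l Q bs P N',
    p <> q ->
    N p = Some (TSent q l Q) -> N q = Some (TRecv bs) -> In (p, l, P) bs ->
    N' p = Some Q -> N' q = Some P ->
    others_same N N' (fun r => r = p \/ r = q) ->
    step N (TrComm p l q) N'.

(* Paths: states st 0, st 1, ..., transitions tr i from st i to st (i+1);
   plen = Some n : finite path with n transitions; None : infinite. *)
Record path : Type := mkPath {
  st : nat -> network;
  tr : nat -> tinfo;
  plen : option nat
}.

Definition is_state_index (pi : path) (i : nat) : Prop :=
  match plen pi with None => True | Some n => i <= n end.
Definition is_trans_index (pi : path) (i : nat) : Prop :=
  match plen pi with None => True | Some n => i < n end.

(* a path is a network state with a maximal sequence of transitions *)
Definition is_path (pi : path) : Prop :=
  (forall i, is_trans_index pi i -> step (st pi i) (tr pi i) (st pi (S i))) /\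
  (forall n, plen pi = Some n -> forall t N', ~ step (st pi n) t N').

Definition suffix (pi : path) (k : nat) : path :=
  mkPath (fun i => st pi (k + i)) (fun i => tr pi (k + i))
         (option_map (fun n => n - k) (plen pi)).

Definition enabled (N : network) (a : label) : Prop :=
  exists t N', step N t N' /\ lab t = a.

Definition engages (pi : path) (a : label) : Prop :=
  exists i, is_trans_index pi i /\ lab (tr pi i) = a.

Definition perpetually_enabled (pi : path) (a : label) : Prop :=
  forall i, is_state_index pi i -> enabled (st pi i) a.

Definition enabled_during (N : network) (u : tinfo) (a : label) : Prop :=
  exists t N', step N t N' /\ lab t = a /\ concurrent t u.

Definition continuously_enabled (pi : path) (a : label) : Prop :=
  perpetually_enabled pi a /\
  forall i, is_trans_index pi i -> enabled_during (st pi i) (tr pi i) a.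

Definition WA_fair (pi : path) : Prop :=
  forall k, is_state_index pi k -> forall a,
    perpetually_enabled (suffix pi k) a -> engages (suffix pi k) a.

Definition JA_fair (pi : path) : Prop :=
  forall k, is_state_index pi k -> forall a,
    continuously_enabled (suffix pi k) a -> engages (suffix pi k) a.

End Session.

(* Main.v *)
Require Import Defs.
From Stdlib Require Import List Arith Lia Classical ClassicalEpsilon.
Import ListNotations.
Set Implicit Arguments.

Fixpoint tsize {Loc Lab : Type} (P : thread Loc Lab) : nat :=
  match P with
  | TSend bs | TRecv bs =>
      S ((fix go (l : list (Loc * Lab * thread Loc Lab)) : nat :=
            match l with
            | [] => 0
            | (_, _, Q) :: l' => tsize Q + go l'
            end) bs)
  | TMu _ Q | TSent _ _ Q => S (tsize Q)
  | _ => 1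
  end.

Lemma tsize_in {Loc Lab : Type} (bs : list (Loc * Lab * thread Loc Lab)) p l P :
  In (p, l, P) bs -> tsize P < tsize (TRecv bs).
Proof.
  induction bs as [|[[p' l'] Q] bs IH]; simpl; [tauto|].
  intros [H|H].
  - inversion H; subst; lia.
  - specialize (IH H). simpl in IH. lia.
Qed.

Lemma step_transport {Loc Lab : Type} (N M N' : network Loc Lab) t :
  step N t N' -> (forall r, comp t r -> M r = N r) -> exists M', step M t M'.
Proof.
  intros H E.
  exists (fun r => if excluded_middle_informative (comp t r) then N' r else M r).
  destruct H as [p bs q l P N1 H1 H2 H3 H4 | p X P N1 H1 H2 H3
                 | p q l Q bs P N1 Hpq H1 H2 H3 H4 H5 H6].
  - eapply st_choice with (bs := bs).
    + rewrite E; simpl; auto.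
    + exact H2.
    + destruct (excluded_middle_informative (comp (TrTau _ p) p)) as [_|n];
        [exact H3| simpl in n; congruence].
    + intros r nr. destruct (excluded_middle_informative (comp (TrTau _ p) r)) as [c|_];
        [simpl in c; contradiction|reflexivity].
  - eapply st_unfold.
    + rewrite E; simpl; eauto.
    + destruct (excluded_middle_informative (comp (TrTau _ p) p)) as [_|n];
        [exact H2| simpl in n; congruence].
    + intros r nr. destruct (excluded_middle_informative (comp (TrTau _ p) r)) as [c|_];
        [simpl in c; contradiction|reflexivity].
  - eapply st_comm with (bs := bs) (Q := Q) (P := P).
    + exact Hpq.
    + rewrite E; simpl; auto.
    + rewrite E; simpl; auto.
    + exact H3.
    + destruct (excluded_middle_informative (comp (TrComm p l q) p)) as [_|n];
        [exact H4| simpl in n; tauto].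
    + destruct (excluded_middle_informative (comp (TrComm p l q) q)) as [_|n];
        [exact H5| simpl in n; tauto].
    + intros r nr. destruct (excluded_middle_informative (comp (TrComm p l q) r)) as [c|_];
        [simpl in c; contradiction|reflexivity].
Qed.

Lemma lab_comm {Loc Lab : Type} (t : tinfo Loc Lab) p l q :
  lab t = Comm p l q -> t = TrComm p l q.
Proof. destruct t; simpl; congruence. Qed.

Lemma lab_tau {Loc Lab : Type} (t : tinfo Loc Lab) :
  lab t = (Tau _ _) -> exists p, t = TrTau _ p.
Proof. destruct t; simpl; try congruence; eauto. Qed.

Lemma comm_enabled_inv {Loc Lab : Type} (N N' : network Loc Lab) p l q :
  step N (TrComm p l q) N' ->
  exists Q bs P, p <> q /\ N p = Some (TSent q l Q) /\ N q = Some (TRecv bs) /\ In (p, l, P) bs.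
Proof. intros H; inversion H; subst; eauto 10. Qed.

Lemma comm_analysis {Loc Lab : Type} (N N' : network Loc Lab) u p l q :
  step N u N' -> enabled N (Comm p l q) -> lab u <> Comm p l q ->
  (comp u q -> exists bs P, N q = Some (TRecv bs) /\ N' q = Some P /\ tsize P < tsize (TRecv bs)) /\
  (~ comp u q -> N' q = N q) /\
  (~ comp u q -> concurrent (TrComm p l q) u).
Proof.
  intros Hu [t [N2 [Ht Hl]]] Hlab.
  apply lab_comm in Hl; subst t.
  destruct (comm_enabled_inv Ht) as [Q [bs [P [Hpq [Hp [Hq Hin]]]]]].
  split; [|split].
  - intros c. destruct Hu as [p' bs' q' l' P' N1 H1 H2 H3 H4 | p' X P' N1 H1 H2 H3
                 | p' q' l' Q' bs' P' N1 Hpq' H1 H2 H3 H4 H5 H6]; simpl in c.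
    + subst; congruence.
    + subst; congruence.
    + destruct c as [c|c]; subst.
      * congruence.
      * rewrite Hq in H2; inversion H2; subst.
        exists bs', P'. split; [exact Hq|]. split; [exact H5|]. eapply tsize_in; eauto.
  - intros c. destruct Hu as [p' bs' q' l' P' N1 H1 H2 H3 H4 | p' X P' N1 H1 H2 H3
                 | p' q' l' Q' bs' P' N1 Hpq' H1 H2 H3 H4 H5 H6]; simpl in c.
    + apply H4; auto.
    + apply H3; auto.
    + apply H6; auto.
  - intros c r cr ur. simpl in cr. destruct cr as [cr|cr]; subst r; [|contradiction].
    destruct Hu as [p' bs' q' l' P' N1 H1 H2 H3 H4 | p' X P' N1 H1 H2 H3
                 | p' q' l' Q' bs' P' N1 Hpq' H1 H2 H3 H4 H5 H6]; simpl in ur, c.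
    + subst; congruence.
    + subst; congruence.
    + destruct ur as [ur|ur]; subst.
      * rewrite Hp in H1; inversion H1; subst. tauto.
      * congruence.
Qed.

Definition tau_ready {Loc Lab : Type} (P : thread Loc Lab) : Prop :=
  match P with TSend _ | TMu _ _ => True | _ => False end.

Lemma comm_untouched {Loc Lab : Type} (N N' : network Loc Lab) p' l' q' r P :
  step N (TrComm p' l' q') N' -> N r = Some P -> tau_ready P ->
  ~ comp (TrComm p' l' q') r /\ N' r = N r.
Proof.
  intros H Hr Hp.
  inversion H as [| |p0 q0 l0 Q0 bs0 P0 N0 Hne Hp' Hq' Hin HN1 HN2 Hoth]; subst.
  assert (nc : ~ (r = p' \/ r = q')).
  { intros [e|e]; subst; [rewrite Hp' in Hr|rewrite Hq' in Hr]; inversion Hr; subst; simpl in Hp; auto. }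
  split; [exact nc|]. apply Hoth; auto.
Qed.

Lemma tau_enabled_inv {Loc Lab : Type} (N N' : network Loc Lab) p :
  step N (TrTau _ p) N' -> exists P, N p = Some P /\ tau_ready P.
Proof. intros H; inversion H; subst; eexists; split; eauto; simpl; auto. Qed.

Definition Pe {Loc Lab : Type} (pi : path Loc Lab) k a :=
  forall j, k <= j -> is_state_index pi j -> enabled (st pi j) a.
Definition Eng {Loc Lab : Type} (pi : path Loc Lab) k a :=
  exists j, k <= j /\ is_trans_index pi j /\ lab (tr pi j) = a.
Definition Ce {Loc Lab : Type} (pi : path Loc Lab) k a :=
  Pe pi k a /\ forall j, k <= j -> is_trans_index pi j -> enabled_during (st pi j) (tr pi j) a.

Lemma sidx_suf {Loc Lab : Type} (pi : path Loc Lab) k i :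
  is_state_index pi k -> (is_state_index (suffix pi k) i <-> is_state_index pi (k + i)).
Proof. unfold is_state_index, suffix; simpl. destruct (plen pi); simpl; lia. Qed.

Lemma tidx_suf {Loc Lab : Type} (pi : path Loc Lab) k i :
  (is_trans_index (suffix pi k) i <-> is_trans_index pi (k + i)).
Proof. unfold is_trans_index, suffix; simpl. destruct (plen pi); simpl; lia. Qed.

Lemma tidx_sidx {Loc Lab : Type} (pi : path Loc Lab) j :
  is_trans_index pi j -> is_state_index pi j /\ is_state_index pi (S j).
Proof. unfold is_trans_index, is_state_index. destruct (plen pi); lia. Qed.

Lemma sidx_le {Loc Lab : Type} (pi : path Loc Lab) j k :
  j <= k -> is_state_index pi k -> is_state_index pi j.
Proof. unfold is_state_index. destruct (plen pi); lia. Qed.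

Lemma Pe_iff {Loc Lab : Type} (pi : path Loc Lab) k a : is_state_index pi k ->
  (perpetually_enabled (suffix pi k) a <-> Pe pi k a).
Proof.
  intros Hk; split.
  - intros H j Hj Hs. replace j with (k + (j - k)) by lia.
    apply (H (j - k)). apply sidx_suf; auto. replace (k + (j - k)) with j by lia; auto.
  - intros H i Hi. apply sidx_suf in Hi; auto. apply (H (k + i)); auto; lia.
Qed.

Lemma Eng_iff {Loc Lab : Type} (pi : path Loc Lab) k a :
  (engages (suffix pi k) a <-> Eng pi k a).
Proof.
  split.
  - intros [i [Hi Hl]]. apply tidx_suf in Hi. exists (k + i); split; [lia|auto].
  - intros [j [Hj [Ht Hl]]]. exists (j - k). split.
    + apply tidx_suf. replace (k + (j - k)) with j by lia; auto.
    + simpl. replace (k + (j - k)) with j by lia; auto.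
Qed.

Lemma Ce_iff {Loc Lab : Type} (pi : path Loc Lab) k a : is_state_index pi k ->
  (continuously_enabled (suffix pi k) a <-> Ce pi k a).
Proof.
  intros Hk; split.
  - intros [H1 H2]. split; [apply Pe_iff; auto|].
    intros j Hj Ht. replace j with (k + (j - k)) by lia.
    apply (H2 (j - k)). apply tidx_suf. replace (k + (j - k)) with j by lia; auto.
  - intros [H1 H2]. split; [apply Pe_iff; auto|].
    intros i Hi. apply tidx_suf in Hi. apply (H2 (k + i)); auto; lia.
Qed.

Lemma Eng_mono {Loc Lab : Type} (pi : path Loc Lab) k k' a :
  k <= k' -> Eng pi k' a -> Eng pi k a.
Proof. intros H [j [Hj Hr]]. exists j; split; [lia|auto]. Qed.

Definition fq {Loc Lab : Type} (pi : path Loc Lab) q j :=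
  match st pi j q with Some P => tsize P | None => 0 end.

Section dummy. End dummy.

Lemma comm_case {Loc Lab : Type} (pi : path Loc Lab) p l q :
  is_path pi ->
  (forall k, is_state_index pi k -> Ce pi k (Comm p l q) -> Eng pi k (Comm p l q)) ->
  forall n k, fq pi q k < n -> is_state_index pi k -> Pe pi k (Comm p l q) ->
  Eng pi k (Comm p l q).
Proof.
  intros [Hstep _] JA n. induction n as [|n IH]; intros k Hf Hk Hpe; [lia|].
  destruct (classic (Eng pi k (Comm p l q))) as [He|Hne]; [exact He|].
  assert (Hlab : forall j, k <= j -> is_trans_index pi j -> lab (tr pi j) <> Comm p l q).
  { intros j Hj Ht e. apply Hne. exists j; auto. }
  assert (Han : forall j, k <= j -> is_trans_index pi j ->
     (comp (tr pi j) q -> fq pi q (S j) < fq pi q j) /\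
     (~ comp (tr pi j) q -> fq pi q (S j) = fq pi q j) /\
     (~ comp (tr pi j) q -> concurrent (TrComm p l q) (tr pi j))).
  { intros j Hj Ht. destruct (@tidx_sidx _ _ _ _ Ht) as [Hs1 Hs2].
    destruct (comm_analysis (Hstep j Ht) (Hpe j Hj Hs1) (Hlab j Hj Ht)) as [A [B C]].
    unfold fq. split; [|split; [|exact C]].
    - intros c. destruct (A c) as [bs [P [E1 [E2 E3]]]]. rewrite E1, E2. exact E3.
    - intros c. rewrite (B c). reflexivity. }
  assert (Hle : forall i, is_state_index pi (k + i) -> fq pi q (k + i) <= fq pi q k).
  { induction i as [|i IHi]; intros Hs; [rewrite Nat.add_0_r; lia|].
    assert (Ht : is_trans_index pi (k + i)).
    { unfold is_trans_index, is_state_index in *. destruct (plen pi); lia. }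
    destruct (@tidx_sidx _ _ _ _ Ht) as [Hs1 _].
    specialize (IHi Hs1). destruct (Han (k + i) ltac:(lia) Ht) as [A [B _]].
    replace (k + S i) with (S (k + i)) by lia.
    destruct (classic (comp (tr pi (k + i)) q)) as [c|c];
      [specialize (A c)|specialize (B c)]; lia. }
  destruct (classic (exists j, k <= j /\ is_trans_index pi j /\ comp (tr pi j) q))
    as [[j [Hj [Ht Hc]]]|Hno].
  - destruct (@tidx_sidx _ _ _ _ Ht) as [Hs1 Hs2].
    pose proof (proj1 (Han j Hj Ht) Hc) as Hlt.
    pose proof (Hle (j - k)) as Hl2. replace (k + (j - k)) with j in Hl2 by lia.
    specialize (Hl2 Hs1).
    apply (Eng_mono (k' := S j)); [lia|].
    apply IH; auto; [lia|].
    intros j' Hj' Hs'. apply Hpe; auto; lia.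
  - apply JA; auto. split; [exact Hpe|].
    intros j Hj Ht. destruct (@tidx_sidx _ _ _ _ Ht) as [Hs1 _].
    destruct (Hpe j Hj Hs1) as [t [N' [Hst Hl]]].
    apply lab_comm in Hl; subst t.
    exists (TrComm p l q), N'. split; [exact Hst|]. split; [reflexivity|].
    apply (Han j Hj Ht). intros c. apply Hno. eauto.
Qed.

Lemma tau_case {Loc Lab : Type} (pi : path Loc Lab) :
  is_path pi ->
  (forall k, is_state_index pi k -> Ce pi k (Tau _ _) -> Eng pi k (Tau _ _)) ->
  forall k, is_state_index pi k -> Pe pi k (Tau _ _) -> Eng pi k (Tau _ _).
Proof.
  intros [Hstep _] JA k Hk Hpe.
  destruct (classic (Eng pi k (Tau _ _))) as [He|Hne]; [exact He|].
  destruct (Hpe k (le_n k) Hk) as [t [N' [Hst Hl]]].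
  destruct (@lab_tau _ _ _ Hl) as [p ->].
  destruct (@tau_enabled_inv _ _ _ _ _ Hst) as [P [HP HR]].
  assert (Hsame : forall i, is_state_index pi (k + i) -> st pi (k + i) p = st pi k p).
  { induction i as [|i IHi]; intros Hs; [rewrite Nat.add_0_r; reflexivity|].
    assert (Ht : is_trans_index pi (k + i)).
    { unfold is_trans_index, is_state_index in *. destruct (plen pi); lia. }
    destruct (@tidx_sidx _ _ _ _ Ht) as [Hs1 _]. specialize (IHi Hs1).
    replace (k + S i) with (S (k + i)) by lia.
    pose proof (Hstep _ Ht) as Hu.
    destruct (tr pi (k + i)) as [r|p' l' q'] eqn:Etr.
    - exfalso. apply Hne. exists (k + i). split; [lia|]. split; [exact Ht|]. rewrite Etr; reflexivity.
    - rewrite HP in IHi.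
      destruct (@comm_untouched _ _ _ _ _ _ _ _ _ Hu IHi HR) as [_ E]. rewrite E, IHi, HP. reflexivity. }
  apply JA; auto. split; [exact Hpe|].
  intros j Hj Ht. destruct (@tidx_sidx _ _ _ _ Ht) as [Hs1 _].
  assert (Ej : st pi j p = Some P).
  { replace j with (k + (j - k)) by lia. rewrite Hsame; auto.
    replace (k + (j - k)) with j by lia; auto. }
  destruct (@step_transport _ _ _ (st pi j) _ _ Hst) as [M' HM].
  { intros r c; simpl in c; subst r. rewrite Ej, HP; reflexivity. }
  exists (TrTau _ p), M'. split; [exact HM|]. split; [reflexivity|].
  pose proof (Hstep _ Ht) as Hu.
  destruct (tr pi j) as [r|p' l' q'] eqn:Etr.
  - exfalso. apply Hne. exists j. split; [lia|]. split; [exact Ht|]. rewrite Etr; reflexivity.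
  - intros r c. simpl in c; subst r.
    exact (proj1 (@comm_untouched _ _ _ _ _ _ _ _ _ Hu Ej HR)).
Qed.

Theorem mainTheorem16 (Loc Lab : Type) (pi : path Loc Lab) :
  wf_network (st pi 0) -> is_path pi ->
  (WA_fair pi <-> JA_fair pi).
Proof.
  intros _ Hp. split.
  - intros WA k Hk a [H _]. apply WA; auto.
  - intros JA.
    assert (JA' : forall k, is_state_index pi k -> forall a, Ce pi k a -> Eng pi k a).
    { intros k Hk a H. apply Eng_iff. apply JA; auto. apply Ce_iff; auto. }
    intros k Hk a H. apply Pe_iff in H; auto. apply Eng_iff.
    destruct a as [|p l q].
    + apply tau_case; auto.
    + apply (@comm_case _ _ pi p l q Hp (fun k Hk => JA' k Hk _) (S (fq pi q k))); auto.
Qed.
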